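(* Let $f:\mathbb{R}^n\to\mathbb{R}$ and $a:\mathbb{R}^n\to\mathbb{R}^m$ be twice differentiable on $\mathbb{R}^n$, with parameters $\beta_1\in(0,1)$, $\beta_2\in(0,1)$, $\beta_3\in(\beta_2,1)$, $\beta_4\in(0,1)$, tolerances $\epsilon_{\mathrm{opt}}\in(0,\infty)$, $\epsilon_{\mathrm{far}},\epsilon_{\mathrm{inf}},\epsilon_{\mathrm{unbd}}\in(0,1)$, and $w\in\mathbb{R}^m$, $w\ge0$. Then, started from a point satisfying condition (C), the Simplified One-Phase Algorithm (Algorithm 1) terminates after a finite number of calls to the aggressive step procedure (Algorithm 2); i.e., it cannot make infinitely many calls to Algorithm 2.
   Context: Problem: minimize $f(x)$ subject to $a(x)\le0$. Notation: $e$ all-ones vector, $S=\mathrm{diag}(s)$, $Y=\mathrm{diag}(y)$, $\nabla a(x)$ the $m\times n$ Jacobian. Definitions: $\mathcal{L}_\mu(x,y)=f(x)+(y-\mu\beta_1e)^Ta(x)$; $\psi_\mu(x)=f(x)-\mu\sum_i(\beta_1a_i(x)+\log(\mu w_i-a_i(x)))$; $\phi_\mu(x,s,y)=\psi_\mu(x)+\|Sy-\mu e\|_\infty^3/\mu^2$; $\sigma(y)=100/\max\{100,\|y\|_\infty\}$; $\mathcal{M}=\nabla^2_{xx}\mathcal{L}_\mu(x,y)+\nabla a(x)^TYS^{-1}\nabla a(x)$. Condition (C): $(x,s,y,\mu)\in\mathbb{R}^n\times\mathbb{R}^m_{++}\times\mathbb{R}^m_{++}\times\mathbb{R}_{++}$,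 $s_iy_i/\mu\in[\beta_2,1/\beta_2]$ for all $i$, $a(x)+s=\mu w$. Termination: (T1) $\sigma(y)\|\nabla_x\mathcal{L}_0(x,y)\|_\infty\le\epsilon_{\mathrm{opt}}$, $\sigma(y)\|Sy\|_\infty\le\epsilon_{\mathrm{opt}}$, $\|a(x)+s\|_\infty\le\epsilon_{\mathrm{opt}}$; (T2) $a(x)^Ty>0$, $\|\nabla a(x)^Ty\|_1/(a(x)^Ty)\le\epsilon_{\mathrm{far}}$, $(\|\nabla a(x)^Ty\|_1+s^Ty)/\|y\|_1\le\epsilon_{\mathrm{inf}}$; (T3) $\|x\|_\infty\ge1/\epsilon_{\mathrm{unbd}}$. Aggressive criterion (A): $\sigma(y)\|\nabla_x\mathcal{L}_\mu(x,y)\|_\infty\le\mu$; $\|\nabla_x\mathcal{L}_\mu(x,y)\|_1\le\|\nabla f(x)-\beta_1\mu\nabla a(x)^Te\|_1+s^Ty$; $s_iy_i/\mu\in[\beta_3,1/\beta_3]$ for all $i$. Direction for $\gamma\in[0,1]$ and $\delta\ge0$ with $\mathcal{M}+\delta I\succ0$: $b_D=\nabla_x\mathcal{L}_{\gamma\mu}(x,y)$, $b_P=(1-\gamma)\mu w$, $b_C=Ys-\gamma\mu e$; $(\mathcal{M}+\delta I)d_x=-(b_D+\nabla a(x)^TS^{-1}(Yb_P-b_C))$; $d_y=-S^{-1}Y(\nabla a(x)d_x+b_P-Y^{-1}b_C)$. Update: $\mu^+=(1-(1-\gamma)\alpha_P)\mu$, $x^+=x+\alpha_Pd_x$, $s^+=\mu^+w-a(x^+)$,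 $y^+=y+\alpha_Dd_y$; admissible if $s^+,y^+,\mu^+>0$ and $s^+_iy^+_i/\mu^+\in[\beta_2,1/\beta_2]$ for all $i$. $\theta(\mu,s)=\min\{1/2,\frac{\beta_3-\beta_2}{2\beta_3\mu}\min_{i:w_i>0}s_i/w_i\}$. Algorithm 2 (aggressive step, given $\delta$): direction with $\gamma=0$; largest $\alpha_P\in[0,\min\{1/2,\mu\}]$ with the update admissible for some $\alpha_D\in[0,1]$; then the largest admissible $\alpha_D$; success iff $\alpha_P\ge\theta(\mu,s)$. Algorithm 3 (stabilization step, given $\delta$): direction with $\gamma=1$; largest $\alpha_P=\alpha_D\in[0,1]$ with the update admissible and $\phi_\mu(x^+,s^+,y^+)\le\phi_\mu(x,s,y)+\alpha_P\beta_4(\tfrac12(\nabla\psi_\mu(x)^Td_x-\tfrac\delta2\alpha_P\|d_x\|^2)-\|Sy-\mu e\|_\infty^3/\mu^2)$. Algorithm 1: input $x^0$, $\mu^0,s^0,y^0>0$ with $a(x^0)+s^0=\mu^0w$ and $s^0_iy^0_i/\mu^0\in[\beta_2,1/\beta_2]$. Each iteration: if (T1), (T2) or (T3) holds at the current point, terminate; set $\delta_{\min}=\max\{0,\mu-2\lambda_{\min}(\mathcal{M})\}$; if (A) holds: if $\delta_{\min}=0$ run Algorithm 2 with $\delta=0$ and accept its point if it succeeds; otherwise (or if $\delta_{\min}>0$) run Algorithm 2 with $\delta$ large enough that it succeeds and accept its point; if (A) fails, run Algorithm 3 with $\delta=\delta_{\min}$ and accept its point. *)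

(* Defs.v *)
From HB Require Import structures.
From mathcomp Require Import all_boot all_order all_algebra.
From mathcomp Require Import all_classical all_reals all_analysis.
Set Implicit Arguments. Unset Strict Implicit. Unset Printing Implicit Defensive.
Import Order.TTheory GRing.Theory Num.Theory.
Import numFieldNormedType.Exports.
Local Open Scope classical_set_scope.
Local Open Scope ring_scope.

Section Calculus.
Variables (R : realType) (n : nat).

Definition ecol k (i : 'I_k) : 'cV[R]_k := delta_mx i 0.

Definition grad (g : 'cV[R]_n -> R) (x : 'cV[R]_n) : 'cV[R]_n :=
  \col_i ('D_(ecol i) g x).

Definition hess (g : 'cV[R]_n -> R) (x : 'cV[R]_n) : 'M[R]_n :=
  \matrix_(i, j) ('D_(ecol i) (fun z => 'D_(ecol j) g z) x).

Definition jac m (F : 'cV[R]_n -> 'cV[R]_m) (x : 'cV[R]_n) : 'M[R]_(m, n) :=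
  \matrix_(i, j) (('D_(ecol j) F x) i 0).

Definition twice_differentiable (V : normedModType R) (F : 'cV[R]_n -> V) :=
  (forall x, differentiable F x) /\
  (forall (j : 'I_n) x, differentiable (fun z => 'D_(ecol j) F z) x).

End Calculus.

Section LinAlg.
Variable R : realType.

Definition norm_inf k (v : 'cV[R]_k) : R := \big[Num.max/0]_i `|v i 0|.
Definition norm1 k (v : 'cV[R]_k) : R := \sum_i `|v i 0|.
Definition norm2sq k (v : 'cV[R]_k) : R := \sum_i (v i 0) ^+ 2.
Definition dotv k (u v : 'cV[R]_k) : R := (u^T *m v) 0 0.
Definition onesv k : 'cV[R]_k := const_mx 1.
Definition diagv k (v : 'cV[R]_k) : 'M[R]_k := diag_mx v^T.

Definition posdef k (A : 'M[R]_k) :=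
  forall v : 'cV[R]_k, v != 0 -> 0 < (v^T *m A *m v) 0 0.

Definition lambda_min k (A : 'M[R]_k) : R := inf [set l : R | eigenvalue A l].

End LinAlg.
Arguments onesv {R k}.

Record op_params (R : realType) (n m : nat) := OPParams {
  op_f : 'cV[R]_n -> R;
  op_a : 'cV[R]_n -> 'cV[R]_m;
  op_beta1 : R; op_beta2 : R; op_beta3 : R; op_beta4 : R;
  op_eps_opt : R; op_eps_far : R; op_eps_inf : R; op_eps_unbd : R;
  op_w : 'cV[R]_m }.

Record ipstate (R : realType) (n m : nat) := IPState {
  st_x : 'cV[R]_n; st_s : 'cV[R]_m; st_y : 'cV[R]_m; st_mu : R }.

Section OnePhase.
Variables (R : realType) (n m : nat) (P : op_params R n m).

Local Notation f := (op_f P).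
Local Notation a := (op_a P).
Local Notation b1 := (op_beta1 P).
Local Notation b2 := (op_beta2 P).
Local Notation b3 := (op_beta3 P).
Local Notation b4 := (op_beta4 P).
Local Notation w := (op_w P).
Local Notation state := (ipstate R n m).

Implicit Types (z : state) (x : 'cV[R]_n) (s y : 'cV[R]_m) (mu : R).

Definition lagr mu y x : R := f x + dotv (y - (mu * b1) *: onesv) (a x).
Definition gradL mu y x : 'cV[R]_n := grad (lagr mu y) x.
Definition hessL mu y x : 'M[R]_n := hess (lagr mu y) x.

Definition psi mu x : R :=
  f x - mu * \sum_i (b1 * a x i 0 + ln (mu * w i 0 - a x i 0)).

Definition phi mu x s y : R :=
  psi mu x + (norm_inf (diagv s *m y - mu *: onesv)) ^+ 3 / mu ^+ 2.

Definition sigma y : R := 100 / Num.max 100 (norm_inf y).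

Definition Mmat z : 'M[R]_n :=
  hessL (st_mu z) (st_y z) (st_x z)
  + (jac a (st_x z))^T *m diagv (st_y z) *m invmx (diagv (st_s z))
    *m jac a (st_x z).

Definition condC z : Prop :=
  [/\ 0 < st_mu z,
      (forall i, 0 < st_s z i 0),
      (forall i, 0 < st_y z i 0),
      (forall i, b2 <= st_s z i 0 * st_y z i 0 / st_mu z <= 1 / b2)
    & a (st_x z) + st_s z = st_mu z *: w].

Definition T1 z : Prop :=
  [/\ sigma (st_y z) * norm_inf (gradL 0 (st_y z) (st_x z)) <= op_eps_opt P,
      sigma (st_y z) * norm_inf (diagv (st_s z) *m st_y z) <= op_eps_opt P
    & norm_inf (a (st_x z) + st_s z) <= op_eps_opt P].

Definition T2 z : Prop :=
  [/\ 0 < dotv (a (st_x z)) (st_y z),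
      norm1 ((jac a (st_x z))^T *m st_y z) / dotv (a (st_x z)) (st_y z)
        <= op_eps_far P
    & (norm1 ((jac a (st_x z))^T *m st_y z) + dotv (st_s z) (st_y z))
        / norm1 (st_y z) <= op_eps_inf P].

Definition T3 z : Prop := 1 / op_eps_unbd P <= norm_inf (st_x z).

Definition terminates z : Prop := T1 z \/ T2 z \/ T3 z.

Definition critA z : Prop :=
  [/\ sigma (st_y z) * norm_inf (gradL (st_mu z) (st_y z) (st_x z)) <= st_mu z,
      norm1 (gradL (st_mu z) (st_y z) (st_x z))
        <= norm1 (grad f (st_x z)
                  - (b1 * st_mu z) *: ((jac a (st_x z))^T *m onesv))
           + dotv (st_s z) (st_y z)
    & forall i, b3 <= st_s z i 0 * st_y z i 0 / st_mu z <= 1 / b3].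

Definition delta_min z : R := Num.max 0 (st_mu z - 2 * lambda_min (Mmat z)).

Definition dir_x (gamma delta : R) z : 'cV[R]_n :=
  let x := st_x z in let s := st_s z in let y := st_y z in let mu := st_mu z in
  let bD := gradL (gamma * mu) y x in
  let bP := ((1 - gamma) * mu) *: w in
  let bC := diagv y *m s - (gamma * mu) *: onesv in
  - (invmx (Mmat z + delta%:M)
     *m (bD + (jac a x)^T *m invmx (diagv s) *m (diagv y *m bP - bC))).

Definition dir_y (gamma delta : R) z : 'cV[R]_m :=
  let x := st_x z in let s := st_s z in let y := st_y z in let mu := st_mu z in
  let bP := ((1 - gamma) * mu) *: w in
  let bC := diagv y *m s - (gamma * mu) *: onesv in
  - (invmx (diagv s) *m diagv y
     *m (jac a x *m dir_x gamma delta z + bP - invmx (diagv y) *m bC)).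

Definition update (gamma delta aP aD : R) z : state :=
  let mu' := (1 - (1 - gamma) * aP) * st_mu z in
  let x' := st_x z + aP *: dir_x gamma delta z in
  IPState x' (mu' *: w - a x') (st_y z + aD *: dir_y gamma delta z) mu'.

Definition admissible z : Prop :=
  [/\ 0 < st_mu z,
      (forall i, 0 < st_s z i 0),
      (forall i, 0 < st_y z i 0)
    & (forall i, b2 <= st_s z i 0 * st_y z i 0 / st_mu z <= 1 / b2)].

Definition theta mu s : R :=
  match [pick i | 0 < w i 0] with
  | Some i0 =>
      Num.min (1 / 2)
        ((b3 - b2) / (2 * b3 * mu) *
         \big[Num.min/(s i0 0 / w i0 0)]_(i | 0 < w i 0) (s i 0 / w i 0))
  | None => 1 / 2  (* minimum over an empty index set is +oo *)
  end.

(* Algorithm 2 (aggressive step) with a given delta: (aP, aD) are the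
   step sizes it computes. *)
Definition alg2_feasP delta z (aP : R) : Prop :=
  0 <= aP <= Num.min (1 / 2) (st_mu z) /\
  exists aD, 0 <= aD <= 1 /\ admissible (update 0 delta aP aD z).

Definition alg2_steps delta z (aP aD : R) : Prop :=
  [/\ 0 <= delta /\ posdef (Mmat z + delta%:M),
      alg2_feasP delta z aP,
      (forall aP', alg2_feasP delta z aP' -> aP' <= aP),
      (0 <= aD <= 1 /\ admissible (update 0 delta aP aD z))
    & (forall aD', 0 <= aD' <= 1 -> admissible (update 0 delta aP aD' z) ->
         aD' <= aD)].

Definition alg2_succeeds z (aP : R) : Prop := theta (st_mu z) (st_s z) <= aP.

Definition alg3_ok delta z (al : R) : Prop :=
  let x := st_x z in let s := st_s z in let y := st_y z in let mu := st_mu z in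
  let dx := dir_x 1 delta z in
  let z' := update 1 delta al al z in
  [/\ 0 <= al <= 1, admissible z'
    & phi mu (st_x z') (st_s z') (st_y z')
        <= phi mu x s y
           + al * b4 * ((1 / 2) * (dotv (grad (psi mu) x) dx
                                   - delta / 2 * al * norm2sq dx)
                        - (norm_inf (diagv s *m y - mu *: onesv)) ^+ 3
                          / mu ^+ 2)].

Definition alg3_step delta z (al : R) : Prop :=
  [/\ 0 <= delta, posdef (Mmat z + delta%:M), alg3_ok delta z al
    & forall al', alg3_ok delta z al' -> al' <= al].

Definition alg1_aggressive_iter z z' : Prop :=
  critA z /\
  ( (delta_min z = 0 /\
       exists aP aD, [/\ alg2_steps 0 z aP aD, alg2_succeeds z aP
                       & z' = update 0 0 aP aD z])
    \/
    ( (delta_min z = 0 ->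
         exists aP aD, alg2_steps 0 z aP aD /\ ~ alg2_succeeds z aP) /\
      exists delta aP aD, [/\ alg2_steps delta z aP aD, alg2_succeeds z aP
                            & z' = update 0 delta aP aD z])).

Definition alg1_stabilization_iter z z' : Prop :=
  ~ critA z /\
  exists al, alg3_step (delta_min z) z al /\
             z' = update 1 (delta_min z) al al z.

Definition alg1_iter z z' : Prop :=
  ~ terminates z /\ (alg1_aggressive_iter z z' \/ alg1_stabilization_iter z z').

(* Algorithm 1 calls Algorithm 2 (at least once) during the iteration
   performed at z iff z is not terminal and (A) holds at z. *)
Definition alg1_calls_alg2 z : Prop := ~ terminates z /\ critA z.

End OnePhase.

(* Main.v *)
Require Import Defs.
From HB Require Import structures.
From mathcomp Require Import all_boot all_order all_algebra.
From mathcomp Require Import all_classical all_reals all_analysis.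
From mathcomp Require Import lra ring.
Import Order.TTheory GRing.Theory Num.Theory.
Import numFieldNormedType.Exports.
Local Open Scope ring_scope.
Set Implicit Arguments. Unset Strict Implicit.

Section Aux.
Variable R : realType.

Lemma bigmax_ge_seq (I : eqType) (r : seq I) (F : I -> R) i :
  i \in r -> F i <= \big[Num.max/0]_(j <- r) F j.
Proof.
elim: r => [//|j r IH]; rewrite in_cons big_cons => /orP[/eqP->|ir].
  by rewrite le_max lexx.
by rewrite le_max (IH ir) orbT.
Qed.

Lemma norm_inf_ge k (v : 'cV[R]_k) i : `|v i 0| <= norm_inf v.
Proof. by rewrite /norm_inf; apply: (@bigmax_ge_seq _ _ (fun j => `|v j 0|)); rewrite mem_index_enum. Qed.

Lemma norm_inf_ge0 k (v : 'cV[R]_k) : 0 <= norm_inf v.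
Proof. by rewrite /norm_inf; elim/big_ind: _ => // x y Hx Hy; rewrite le_max Hx. Qed.

Lemma norm_inf_le k (v : 'cV[R]_k) c : 0 <= c -> (forall i, `|v i 0| <= c) -> norm_inf v <= c.
Proof. by move=> c0 H; rewrite /norm_inf; elim/big_ind: _ => // x y Hx Hy; rewrite ge_max Hx. Qed.

Lemma norm1_ge0 k (v : 'cV[R]_k) : 0 <= norm1 v.
Proof. by apply: sumr_ge0 => i _. Qed.

Lemma norm1_ge k (v : 'cV[R]_k) i : `|v i 0| <= norm1 v.
Proof.
rewrite /norm1 (bigD1 i) //= lerDl; exact: sumr_ge0.
Qed.

Lemma norm1D k (u v : 'cV[R]_k) : norm1 (u + v) <= norm1 u + norm1 v.
Proof. by rewrite /norm1 -big_split /=; apply: ler_sum => i _; rewrite mxE ler_normD. Qed.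

Lemma norm1N k (v : 'cV[R]_k) : norm1 (- v) = norm1 v.
Proof. by apply: eq_bigr => i _; rewrite mxE normrN. Qed.

Lemma norm1B k (u v : 'cV[R]_k) : norm1 (u - v) <= norm1 u + norm1 v.
Proof. by rewrite -(norm1N v) norm1D. Qed.

Lemma norm1Z k c (v : 'cV[R]_k) : norm1 (c *: v) = `|c| * norm1 v.
Proof. by rewrite /norm1 mulr_sumr; apply: eq_bigr => i _; rewrite mxE normrM. Qed.

Lemma norm1_le k (v : 'cV[R]_k) c : (forall i, `|v i 0| <= c) -> norm1 v <= k%:R * c.
Proof.
move=> H; apply: le_trans (ler_sum _ (fun i _ => H i)) _.
by rewrite sumr_const card_ord mulr_natl.
Qed.

Lemma norm_infD k (u v : 'cV[R]_k) : norm_inf (u + v) <= norm_inf u + norm_inf v.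
Proof.
apply: norm_inf_le; first by rewrite addr_ge0 ?norm_inf_ge0.
move=> i; rewrite mxE; apply: le_trans (ler_normD _ _) _.
by apply: lerD; apply: norm_inf_ge.
Qed.

Lemma norm_infZ k c (v : 'cV[R]_k) : norm_inf (c *: v) <= `|c| * norm_inf v.
Proof.
apply: norm_inf_le; first by rewrite mulr_ge0 ?norm_inf_ge0.
by move=> i; rewrite mxE normrM ler_wpM2l // norm_inf_ge.
Qed.

Lemma dotvE k (u v : 'cV[R]_k) : dotv u v = \sum_i u i 0 * v i 0.
Proof. by rewrite /dotv mxE; apply: eq_bigr => i _; rewrite mxE. Qed.

Lemma diag_mulE k (s y : 'cV[R]_k) i : (diagv s *m y) i 0 = s i 0 * y i 0.
Proof. by rewrite /diagv mul_diag_mx mxE mxE. Qed.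

Lemma sigma_le1 k (y : 'cV[R]_k) : 0 <= sigma y <= 1.
Proof.
rewrite /sigma; have h : 0 < Num.max 100 (norm_inf y) :> R.
  by rewrite lt_max ltr0n.
apply/andP; split; first by rewrite divr_ge0 // ltW.
by rewrite ler_pdivrMr // mul1r le_max lexx.
Qed.

End Aux.

Section Aux2.
Variable R : realType.

Lemma cont_sum (T : topologicalType) (I : Type) (r : seq I) (F : I -> T -> R) x :
  (forall i, {for x, continuous (F i)}) ->
  {for x, continuous (fun z => \sum_(i <- r) F i z)}.
Proof.
move=> H; elim: r => [|i r IH].
  rewrite (_ : (fun z => \sum_(i <- [::]) F i z) = cst 0).
    exact: cst_continuous.
  by apply/funext => z; rewrite big_nil.
rewrite (_ : (fun z => \sum_(j <- i :: r) F j z) = F i + (fun z => \sum_(j <- r) F j z)).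
  exact: (continuousD (H i) IH).
by apply/funext => z; rewrite big_cons.
Qed.

Lemma dotv_cont k (u : 'cV[R]_k) : continuous (dotv u).
Proof.
move=> x; have -> : dotv u = (fun z => \sum_(i <- index_enum 'I_k) u i 0 * z i 0).
  by apply/funext => z; rewrite dotvE.
apply: cont_sum => i; apply: continuousM; first exact: cst_continuous.
exact: coord_continuous.
Qed.

Lemma dotv_lin k (u : 'cV[R]_k) : linear (dotv u).
Proof.
move=> c y z; rewrite /dotv mulmxDr -scalemxAr !mxE.
reflexivity.
Qed.

Definition dotL k (u : 'cV[R]_k) : {linear 'cV[R]_k -> R} :=
  HB.pack (dotv u) (GRing.isLinear.Build _ _ _ _ _ (dotv_lin u)).

Lemma derive_dot n k (u : 'cV[R]_k) (g : 'cV[R]_n -> 'cV[R]_k) x v :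
  differentiable g x -> 'D_v (fun z => dotv u (g z)) x = dotv u ('D_v g x).
Proof.
move=> dg.
have cL : continuous (dotL u) by exact: dotv_cont.
have -> : (fun z => dotv u (g z)) = (dotL u) \o g by [].
have dL : differentiable (dotL u) (g x) by exact: linear_differentiable.
rewrite deriveE; last exact: differentiable_comp.
by rewrite diff_comp // diff_lin // deriveE.
Qed.


Lemma gradL_formula n m (P : op_params R n m) c y x :
  (forall x, differentiable (op_f P) x) -> (forall x, differentiable (op_a P) x) ->
  gradL P c y x = grad (op_f P) x
     + (jac (op_a P) x)^T *m (y - (c * op_beta1 P) *: onesv).
Proof.
move=> df da; set u := y - _.
apply/matrixP => j k; rewrite ord1 !mxE.
have -> : lagr P c y = op_f P + (fun z => dotv u (op_a P z)) by [].
have dc : differentiable (fun z => dotv u (op_a P z)) x.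
  have -> : (fun z => dotv u (op_a P z)) = (dotL u) \o (op_a P) by [].
  apply: differentiable_comp => //; apply: linear_differentiable; exact: dotv_cont.
rewrite deriveD; [|exact: diff_derivable|exact: diff_derivable].
rewrite derive_dot // dotvE; congr (_ + _).
by apply: eq_bigr => i _; rewrite !mxE mulrC.
Qed.


Lemma trmx_cont n : continuous (fun v : 'rV[R]_n => v^T).
Proof.
move=> M s /= /nbhs_ballP [e e0 es]; apply/nbhs_ballP; exists e => //= N [_ MN].
apply: es; split => // i j; rewrite !mxE; exact: MN.
Qed.

Lemma box_bound n (h : 'cV[R]_n -> R) B : continuous h ->
  exists M, forall x, norm_inf x <= B -> `|h x| <= M.
Proof.
move=> hc.
pose A := [set v : 'rV[R]_n | forall i, (fun=> `[-B, B]%classic) i (v ord0 i)]%classic.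
have cA : compact A by apply: rV_compact => i; exact: segment_compact.
have cg : continuous (h \o (fun v : 'rV[R]_n => v^T)).
  by move=> v; apply: continuous_comp; [exact: trmx_cont|exact: hc].
have /compact_bounded [M [_ HM]] := continuous_compact (continuous_subspaceT cg) cA.
exists (M + 1) => x Hx.
have M1 : M < M + 1 by rewrite ltrDl ltr01.
have := HM (M + 1) M1 (h x).
apply; exists (trmx x); last by rewrite /= trmxK.
move=> i /=; rewrite mxE in_itv /= -ler_norml.
exact: le_trans (norm_inf_ge _ _) Hx.
Qed.


Lemma sum_ge_term (I : finType) (F : I -> R) i :
  (forall j, 0 <= F j) -> F i <= \sum_j F j.
Proof. by move=> H; rewrite (bigD1 i) //= lerDl; apply: sumr_ge0. Qed.

Lemma mx_entry_le p q (M : 'M[R]_(p, q)) i j : `|M i j| <= `|M|.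
Proof.
have -> : `|M| = mx_norm M by [].
rewrite mx_normrE.
have := @bigmax_ge_seq _ _ (index_enum _) (fun ij : 'I_p * 'I_q => `|M ij.1 ij.2|) (i, j).
by apply; rewrite mem_index_enum.
Qed.

Lemma deriv_bound n m (f : 'cV[R]_n -> R) (a : 'cV[R]_n -> 'cV[R]_m) B :
  twice_differentiable f -> twice_differentiable a ->
  exists M, 0 <= M /\ forall x, norm_inf x <= B ->
    (forall j, `|grad f x j 0| <= M) /\ (forall i j, `|jac a x i j| <= M).
Proof.
move=> [df ddf] [da dda].
pose h x := \sum_j `|'D_(ecol _ j) f x| + \sum_j `|'D_(ecol _ j) a x|.
have hc : continuous h.
  move=> x; apply: continuousD.
    apply: cont_sum => j; apply: continuous_comp; last exact: norm_continuous.
    exact: differentiable_continuous.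
  apply: cont_sum => j; apply: continuous_comp; last exact: norm_continuous.
  exact: differentiable_continuous.
have [M0 HM0] := box_bound B hc.
exists `|M0|; split => // x Hx.
have hle : h x <= `|M0| by apply: le_trans (ler_norm _) (le_trans (HM0 x Hx) (ler_norm _)).
split.
  move=> j; rewrite mxE; apply: le_trans hle; rewrite /h.
  by rewrite (bigD1 j) //= -addrA lerDl addr_ge0 // sumr_ge0.
move=> i j; rewrite mxE; apply: le_trans (mx_entry_le _ i 0) _.
apply: le_trans hle; rewrite /h.
by rewrite [X in _ + X](bigD1 j) //= addrCA lerDl addr_ge0 // sumr_ge0.
Qed.

End Aux2.

Section Key.
Variable R : realType.

Lemma Jt1_bound p q (J : 'M[R]_(p, q)) (M : R) j :
  (forall i j, `|J i j| <= M) -> `|((J^T) *m onesv) j 0| <= p%:R * M.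
Proof.
move=> HJ.
have -> : (J^T *m onesv) j 0 = \sum_i J i j.
  by rewrite !mxE; apply: eq_bigr => i _; rewrite !mxE mulr1.
apply: le_trans (ler_norm_sum _ _ _) _.
apply: le_trans (ler_sum _ (fun i _ => HJ i j)) _.
by rewrite sumr_const card_ord mulr_natl.
Qed.

Lemma agg_extract n m (P : op_params R n m) z z' :
  alg1_aggressive_iter P z z' ->
  exists delta aP aD, [/\ alg2_steps P delta z aP aD, alg2_succeeds P z aP
                       & z' = update P 0 delta aP aD z].
Proof.
move=> [_ [[_ [aP [aD [H1 H2 H3]]]] | [_ [d [aP [aD [H1 H2 H3]]]]]]].
  by exists 0, aP, aD.
by exists d, aP, aD.
Qed.


Lemma key n m (P : op_params R n m) :
  twice_differentiable (op_f P) -> twice_differentiable (op_a P) ->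
  0 < op_beta1 P -> 0 < op_beta2 P -> op_beta2 P < op_beta3 P -> op_beta3 P < 1 ->
  0 < op_eps_opt P -> 0 < op_eps_far P -> 0 < op_eps_inf P -> 0 < op_eps_unbd P ->
  (forall i, 0 <= op_w P i 0) ->
  forall mu0, 0 < mu0 -> exists2 d, 0 < d & forall z z',
    st_mu z <= mu0 -> 0 < st_mu z -> (forall i, 0 < st_s z i 0) ->
    (forall i, 0 < st_y z i 0) ->
    op_a P (st_x z) + st_s z = st_mu z *: op_w P ->
    alg1_calls_alg2 P z -> alg1_iter P z z' -> st_mu z' <= st_mu z - d.
Proof.
move=> tdf tda b1p b2p b23 b31 eop efp eip eup wge mu0 mu0p.
set b1 := op_beta1 P; set b2 := op_beta2 P; set b3 := op_beta3 P.
set w := op_w P.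
have b3p : 0 < b3 by apply: lt_trans b23.
have [M [M0 HM]] := deriv_bound (1 / op_eps_unbd P) tdf tda.
set W := norm_inf w.
have W0 : 0 <= W by apply: norm_inf_ge0.
set D := 1 + b1 * (m%:R * M) + 1 / b3 + W.
have mM0 : 0 <= m%:R * M by apply: mulr_ge0.
have D1 : 1 <= D.
  rewrite /D -!addrA lerDl; apply: addr_ge0; first exact: mulr_ge0 (ltW b1p) mM0.
  by apply: addr_ge0 => //; rewrite divr_ge0 // ltW.
have Dp : 0 < D by apply: lt_le_trans D1.
set eps := op_eps_opt P / D.
have epsp : 0 < eps by apply: divr_gt0.
have epsD : eps * D = op_eps_opt P by rewrite /eps mulrVK // unitfE gt_eqF.
set G0 := n%:R * M + b1 * mu0 * (n%:R * (m%:R * M)).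
set S0 := m%:R * mu0 / b3.
set K := 2 * G0 + S0.
have G00 : 0 <= G0.
  apply: addr_ge0; first exact: mulr_ge0.
  apply: mulr_ge0; [apply: mulr_ge0; apply: ltW => //|exact: mulr_ge0].
have S00 : 0 <= S0 by apply: divr_ge0; [apply: mulr_ge0 => //; apply: ltW|apply: ltW].
have K0 : 0 <= K by apply: addr_ge0 => //; apply: mulr_ge0.
set Z := S0 / eps + (K / op_eps_far P + S0) / eps + W * (K + S0) / op_eps_inf P + 1.
have Zp : 0 < Z.
  rewrite /Z ltr_pwDr //; apply: addr_ge0; first apply: addr_ge0.
  - by apply: divr_ge0 => //; apply: ltW.
  - apply: divr_ge0; last exact: ltW.
    by apply: addr_ge0 => //; apply: divr_ge0 => //; apply: ltW.
  - apply: divr_ge0; last exact: ltW.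
    by apply: mulr_ge0 => //; apply: addr_ge0.
set L := b3 * eps / Z.
have Lp : 0 < L by apply: divr_gt0 => //; apply: mulr_gt0.
set th0 := Num.min (1 / 2) ((b3 - b2) / (2 * b3 * mu0) * L).
have th0p : 0 < th0.
  rewrite lt_min divr_gt0 //=; apply: mulr_gt0 => //; apply: divr_gt0.
    by rewrite subr_gt0.
  by apply: mulr_gt0 => //; apply: mulr_gt0.
exists (th0 * eps); first exact: mulr_gt0.
move=> [x s y mu] z' /= mule0 mup sp yp axs [nterm cA] [_ [agg|[ncA _]]]; last by [].
have [delta [aP [aD [st succ ->]]]] := agg_extract agg.
rewrite /=.
case: st => _ [/andP [aP0 aPle] _] _ _ _.
have xB : norm_inf x <= 1 / op_eps_unbd P.
  case: (leP (1 / op_eps_unbd P) (norm_inf x)) => [H|H]; last exact: ltW.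
  by exfalso; apply: nterm; right; right.
have [gM JM] := HM x xB.
set J := jac (op_a P) x.
set Je := J^T *m onesv.
have Jeinf : norm_inf Je <= m%:R * M.
  apply: norm_inf_le => // j; exact: Jt1_bound.
have Je1 : norm1 Je <= n%:R * (m%:R * M).
  apply: norm1_le => j; exact: Jt1_bound.
have gf1 : norm1 (grad (op_f P) x) <= n%:R * M by apply: norm1_le.
have gL (c : R) : gradL P c y x = grad (op_f P) x + J^T *m y - (c * b1) *: Je.
  rewrite gradL_formula; [|exact: tdf.1|exact: tda.1].
  by rewrite mulmxBr -scalemxAr addrA.
have gL0 : gradL P 0 y x = gradL P mu y x + (mu * b1) *: Je.
  by rewrite !gL mul0r scale0r subr0 subrK.
case: cA => [A1 A2 A3].
have syu i : s i 0 * y i 0 <= mu / b3.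
  have /andP [_ H] := A3 i; rewrite /= ler_pdivrMr // in H.
  by rewrite mul1r [_^-1 * _]mulrC in H.
have syl i : b3 * mu <= s i 0 * y i 0.
  by have /andP [H _] := A3 i; rewrite /= ler_pdivlMr // in H.
have /andP [sg0 sg1] := sigma_le1 y.
have nJe0 := norm_inf_ge0 Je.
have mueps : eps < mu.
  rewrite ltNge; apply/negP => Hle; apply: nterm; left; split.
  - rewrite /= gL0.
    have h1 := norm_infD (gradL P mu y x) ((mu * b1) *: Je).
    have h2 := norm_infZ (mu * b1) Je.
    have mb0 : 0 <= mu * b1 by apply: mulr_ge0; apply: ltW.
    rewrite ger0_norm // in h2.
    move: A1 => /= A1.
    set a1 := norm_inf (gradL P mu y x) in h1 A1 *.
    set X := norm_inf _ in h1 *.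
    set sg := sigma y in sg0 sg1 A1 *.
    have t0 : 0 <= mu * b1 * norm_inf Je by apply: mulr_ge0.
    have t1 : mu * b1 * norm_inf Je <= mu * b1 * (m%:R * M) by apply: ler_wpM2l.
    have e1 : 0 <= eps * (1 / b3) by apply: mulr_ge0; [apply: ltW|apply: divr_ge0; [|apply: ltW]].
    have e2 : 0 <= eps * W by apply: mulr_ge0 => //; apply: ltW.
    have e3 : mu * b1 * (m%:R * M) <= eps * b1 * (m%:R * M).
      by apply: ler_wpM2r => //; apply: ler_wpM2r => //; apply: ltW.
    rewrite -epsD /D.
    nra.
  - rewrite /=.
    have hX : norm_inf (diagv s *m y) <= mu / b3.
      apply: norm_inf_le; first by apply: divr_ge0; apply: ltW.
      move=> i; rewrite diag_mulE ger0_norm; first exact: syu.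
      by apply: mulr_ge0; apply: ltW.
    have hX0 := norm_inf_ge0 (diagv s *m y).
    have e1 : mu / b3 <= eps * (1 / b3).
      by rewrite mul1r; apply: ler_wpM2r => //; rewrite invr_ge0 ltW.
    have e2 : 0 <= eps * W by apply: mulr_ge0 => //; apply: ltW.
    have e4 : 0 <= eps * b1 * (m%:R * M).
      by apply: mulr_ge0 => //; apply: mulr_ge0; apply: ltW.
    rewrite -epsD /D.
    set sg := sigma y in sg0 sg1 *.
    nra.
  - rewrite /= axs.
    have h2 := norm_infZ mu w.
    rewrite ger0_norm -/W in h2; last exact: ltW.
    have e5 : mu * W <= eps * W by apply: ler_wpM2r.
    have e1 : 0 <= eps * (1 / b3) by apply: mulr_ge0; [apply: ltW|apply: divr_ge0; [|apply: ltW]].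
    have e4 : 0 <= eps * b1 * (m%:R * M).
      by apply: mulr_ge0 => //; apply: mulr_ge0; apply: ltW.
    rewrite -epsD /D.
    nra.
have syS : dotv s y <= S0.
  rewrite dotvE; apply: le_trans (ler_sum _ (fun i _ => syu i)) _.
  rewrite sumr_const card_ord -mulr_natl /S0 -mulrA.
  apply: ler_wpM2l => //; apply: ler_wpM2r => //; rewrite invr_ge0 ltW //.
have sy0 : 0 <= dotv s y.
  by rewrite dotvE; apply: sumr_ge0 => i _; apply: mulr_ge0; apply: ltW.
set g := grad (op_f P) x - (b1 * mu) *: Je.
have gLmu : gradL P mu y x = g + J^T *m y by rewrite gL mulrC addrAC.
move: A2 => /= A2; rewrite -/J -/Je -/g in A2.
have g1 : norm1 g <= G0.
  apply: le_trans (norm1B _ _) _; rewrite norm1Z ger0_norm; last by apply: mulr_ge0; apply: ltW.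
  have t1 : b1 * mu * norm1 Je <= b1 * mu0 * (n%:R * (m%:R * M)).
    apply: ler_pM => //; first by apply: mulr_ge0; apply: ltW.
      exact: norm1_ge0.
    by apply: ler_wpM2l => //; apply: ltW.
  rewrite /G0; exact: lerD.
have NJ : norm1 (J^T *m y) <= K.
  have -> : J^T *m y = gradL P mu y x - g by rewrite gLmu addrC addKr.
  apply: le_trans (norm1B _ _) _; rewrite /K; nra.
have NJ0 := norm1_ge0 (J^T *m y).
have ax : op_a P x = mu *: w - s by rewrite -axs addrK.
have Ta : dotv (op_a P x) y = mu * dotv w y - dotv s y.
  rewrite ax !dotvE mulr_sumr -sumrB; apply: eq_bigr => i _.
  by rewrite !mxE mulrBl mulrA.
have wyge i : w i 0 * y i 0 <= dotv w y.
  rewrite dotvE (bigD1 i) //= lerDl; apply: sumr_ge0 => j _.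
  by apply: mulr_ge0 => //; apply: ltW.
have Zp1 : 0 <= S0 / eps by apply: divr_ge0 => //; apply: ltW.
have Zp2 : 0 <= (K / op_eps_far P + S0) / eps.
  apply: divr_ge0; last exact: ltW.
  by apply: addr_ge0 => //; apply: divr_ge0 => //; apply: ltW.
have Zp3 : 0 <= W * (K + S0) / op_eps_inf P.
  apply: divr_ge0; last exact: ltW.
  by apply: mulr_ge0 => //; apply: addr_ge0.
have wyZ i : w i 0 * y i 0 <= Z.
  set Dw := dotv w y in Ta wyge *.
  have Dw0 : 0 <= Dw by apply: le_trans (wyge i); apply: mulr_ge0 => //; apply: ltW.
  case: (lerP (dotv (op_a P x) y) 0) => Ta0.
    apply: le_trans (wyge i) _.
    have : Dw <= S0 / eps by rewrite ler_pdivlMr //; nra.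
    rewrite /Z; nra.
  case: (lerP (norm1 (J^T *m y) / dotv (op_a P x) y) (op_eps_far P)) => r1.
    have r2 : op_eps_inf P < (norm1 (J^T *m y) + dotv s y) / norm1 y.
      rewrite ltNge; apply/negP => H; apply: nterm; right; left; split => //.
    have ny0 := norm1_ge0 y.
    have nyp : 0 < norm1 y.
      rewrite lt_neqAle ny0 andbT; apply/negP => /eqP H.
      by move: r2; rewrite -H invr0 mulr0 ltNge (ltW eip).
    rewrite ltr_pdivlMr // in r2.
    have nyb : norm1 y <= (K + S0) / op_eps_inf P by rewrite ler_pdivlMr //; nra.
    have wiW : w i 0 <= W by apply: le_trans (ler_norm _) (norm_inf_ge _ _).
    have yin : y i 0 <= norm1 y by apply: le_trans (ler_norm _) (norm1_ge _ _).
    have : w i 0 * y i 0 <= W * (K + S0) / op_eps_inf P.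
      rewrite -mulrA; apply: ler_pM => //; first exact: ltW (yp i).
      exact: le_trans yin nyb.
    rewrite /Z; nra.
  rewrite ltr_pdivlMr // in r1.
  have Tb : dotv (op_a P x) y <= K / op_eps_far P by rewrite ler_pdivlMr //; nra.
  apply: le_trans (wyge i) _.
  have : Dw <= (K / op_eps_far P + S0) / eps by rewrite ler_pdivlMr //; nra.
  rewrite /Z; nra.
have sw i : 0 < w i 0 -> L <= s i 0 / w i 0.
  move=> wi; rewrite ler_pdivlMr //.
  have LZ : L * Z = b3 * eps by rewrite /L divfK // gt_eqF.
  have h1 : L * (w i 0 * y i 0) <= L * Z by apply: ler_wpM2l; [apply: ltW|].
  have h2 := syl i.
  have h3 : b3 * eps <= b3 * mu by apply: ler_wpM2l; apply: ltW.
  rewrite -(ler_pM2r (yp i)) -mulrA; apply: le_trans h1 _.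
  by rewrite LZ; apply: le_trans h3 h2.
have thb : th0 <= theta P mu s.
  rewrite /theta -/b2 -/b3 -/w; case: pickP => [i0 /= wi0 | _]; last by rewrite ge_min lexx.
  rewrite le_min; apply/andP; split; first by rewrite ge_min lexx.
  apply: (@le_trans _ _ ((b3 - b2) / (2 * b3 * mu0) * L)); first by rewrite /th0 ge_min lexx orbT.
  have bm : L <= \big[Num.min/(s i0 0 / w i0 0)]_(i | 0 < w i 0) (s i 0 / w i 0).
    by apply: (big_ind (fun v => L <= v)) => [|u v Hu Hv|i Hi]; [exact: sw|rewrite le_min Hu|exact: sw].
  have c0 : 0 <= (b3 - b2) / (2 * b3 * mu0).
    by apply: divr_ge0; [rewrite subr_ge0 ltW|apply: mulr_ge0; [apply: mulr_ge0|]; apply: ltW].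
  apply: ler_pM => //; first exact: ltW.
  apply: ler_wpM2l; first by rewrite subr_ge0 ltW.
  rewrite lef_pV2 ?posrE //; first by apply: ler_wpM2l => //; apply: mulr_ge0 => //; apply: ltW.
    by apply: mulr_gt0 => //; apply: mulr_gt0.
  by apply: mulr_gt0 => //; apply: mulr_gt0.
move: succ; rewrite /alg2_succeeds /= => succ.
have th00 := ltW th0p.
have ep0 := ltW epsp.
nra.
Qed.

End Key.

Unset Implicit Arguments. Set Strict Implicit.

Theorem corollary1 (R : realType) (n m : nat)
  (f : 'cV[R]_n -> R) (a : 'cV[R]_n -> 'cV[R]_m)
  (beta1 beta2 beta3 beta4 eps_opt eps_far eps_inf eps_unbd : R)
  (w : 'cV[R]_m) :
  twice_differentiable f -> twice_differentiable a ->
  0 < beta1 < 1 -> 0 < beta2 < 1 -> beta2 < beta3 < 1 -> 0 < beta4 < 1 ->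
  0 < eps_opt -> 0 < eps_far < 1 -> 0 < eps_inf < 1 -> 0 < eps_unbd < 1 ->
  (forall i, 0 <= w i 0) ->
  let P := OPParams f a beta1 beta2 beta3 beta4
                    eps_opt eps_far eps_inf eps_unbd w in
  forall run : nat -> ipstate R n m,
    condC P (run 0%N) ->
    (forall k, alg1_iter P (run k) (run k.+1)) ->
    exists N : nat, forall k : nat, (N <= k)%N -> ~ alg1_calls_alg2 P (run k).
Proof.
move=> tdf tda /andP[b1p _] /andP[b2p _] /andP[b23 b31] _ eop /andP[efp _]
  /andP[eip _] /andP[eup _] wge P run H0 Hit.
pose mu k := st_mu (run k).
have inv k : [/\ 0 < st_mu (run k), (forall i, 0 < st_s (run k) i 0),
    (forall i, 0 < st_y (run k) i 0)
  & op_a P (st_x (run k)) + st_s (run k) = st_mu (run k) *: op_w P].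
  case: k => [|k]; first by case: H0.
  have [_ [agg|[_ [al [st ->]]]]] := Hit k.
    have [d [aP [aD [st _ ->]]]] := agg_extract agg.
    case: st => _ _ _ [_ [mu' s' y' _]] _; split => //.
    by rewrite /= addrC subrK.
  case: st => _ _ [_ [mu' s' y' _] _] _; split => //.
  by rewrite /= addrC subrK.
have mono k : mu k.+1 <= mu k.
  have [mup _ _ _] := inv k.
  rewrite /mu.
  have [_ [agg|[_ [al [st ->]]]]] := Hit k.
    have [d [aP [aD [st _ ->]]]] := agg_extract agg.
    case: st => _ [/andP [aP0 _] _] _ _ _.
    rewrite /=; move: mup; set u := st_mu (run k) => mup; nra.
  by rewrite /= subrr mul0r subr0 mul1r.
have monoK k l : (k <= l)%N -> mu l <= mu k.
  move=> /subnK <-; elim: (l - k)%N => [|j IH]; first by rewrite add0n.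
  by rewrite addSn; apply: le_trans (mono _) IH.
have [mu0p _ _ _] := inv 0%N.
have [d dp Hd] := @key _ _ _ P tdf tda b1p b2p b23 b31 eop efp eip eup wge (st_mu (run 0%N)) mu0p.
have step k : alg1_calls_alg2 P (run k) -> mu k.+1 <= mu k - d.
  have [mup sp yp axs] := inv k.
  by move=> c; apply: (Hd (run k) (run k.+1) (monoK 0%N k (leq0n k)) mup sp yp axs c (Hit k)).
have bound (j : nat) : (exists N : nat, forall k : nat, (N <= k)%N -> ~ alg1_calls_alg2 P (run k))
    \/ exists k, mu k <= mu 0%N - j%:R * d.
  elim: j => [|j [IH|[k Hk]]]; first by right; exists 0%N; rewrite mul0r subr0.
    by left.
  case: (pselect (exists k', (k <= k')%N /\ alg1_calls_alg2 P (run k'))).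
    move=> [k' [kk' c]]; right; exists k'.+1.
    apply: le_trans (step _ c) _.
    have := monoK _ _ kk'; rewrite -natr1; lra.
  move=> H; left; exists k => k' kk' c; apply: H; exists k'; split.
  by [].
  by [].
have [//|[k Hk]] := bound (Num.truncn (mu 0%N / d)).+1.
have := truncnS_gt (mu 0%N / d).
rewrite ltr_pdivrMr // => H.
have [muk _ _ _] := inv k.
rewrite /mu in Hk H muk; lra.
Qed.
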